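(* Let $d\ge1$ and let $\Psi$, $B$, $b$ satisfy the standing assumptions (A1)–(A4) in the context. For $t\ge0$ and $V\in C^2(\mathbb{R}^d)$ define $$\mathcal L_t(V)(x)=-\langle\nabla V(x),B(t,x)\nabla\Psi(x)\rangle+\operatorname{div}\big(B(t,x)\nabla V(x)\big),$$ and let $V_a(x)=\exp(a(1+|x|^2)^{1/2})$. Then for every $a>0$ there exist $\lambda,\rho>0$ such that for all $t\ge0$ and all $x\in\mathbb{R}^d$, $$\mathcal L_t(V_a)(x)\le-\lambda V_a(x)+\rho.$$
   Context: $|\cdot|$ is the Euclidean norm on vectors and the operator norm on matrices; $a\vee b=\max\{a,b\}$; $\operatorname{div}B$ is the row-wise divergence $(\operatorname{div}B)_i=\sum_j\partial_{x_j}B_{ij}$, and $\operatorname{div}$ of a vector field is the usual divergence (taken in $x$). Standing assumptions: (A1) $\Psi\in C^2(\mathbb{R}^d)$, $\nabla\Psi$ $L$-Lipschitz, $\nabla\Psi(0)=0$. (A2) $B:[0,\infty)\times\mathbb{R}^d\to\mathbb{R}^{d\times d}$ symmetric with $\beta_lI\preceq B(t,x)\preceq\beta_uI$, $\beta_l,\beta_u>0$. (A3) $B$ is $C^2$ in $x$ and there are $L,n_B>0$, $\delta\ge1/2$ with, for all $x,y$, $s,t>0$: $|B(t,x)-B(t,y)|\vee|\operatorname{div}B(t,x)-\operatorname{div}B(t,y)|\le L(1+|x|^{n_B}+|y|^{n_B})|x-y|$ and $|B(s,x)-B(t,x)|\vee|\operatorname{div}B(s,x)-\operatorname{div}B(t,x)|\le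 L(1+|x|^{n_B})|s-t|^\delta$. (A4) $b(t,x)=-B(t,x)\nabla\Psi(x)+\operatorname{div}B(t,x)$ satisfies $\lim_{r\to\infty}\sup_{|x|\ge r,t\ge0}\langle\frac{x}{|x|},\frac{b(t,x)}{|b(t,x)|}\rangle<0$ and $\lim_{r\to\infty}\inf_{|x|\ge r,t\ge0}|b(t,x)|=\infty$. *)

(* Defs.v *)
From HB Require Import structures.
From mathcomp Require Import all_boot all_order all_algebra.
From mathcomp Require Import all_classical all_reals all_analysis.
Set Implicit Arguments. Unset Strict Implicit. Unset Printing Implicit Defensive.
Import Order.TTheory GRing.Theory Num.Theory.
Import numFieldNormedType.Exports.
Local Open Scope classical_set_scope.
Local Open Scope ring_scope.

Section Defs.
Variables (R : realType) (d : nat).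
Implicit Types (x y u v : 'rV[R]_d) (A : 'M[R]_d).

Definition ebasis (j : 'I_d) : 'rV[R]_d := \row_k (k == j)%:R.

Definition dotv u v : R := \sum_(i < d) u 0 i * v 0 i.
Definition enorm u : R := Num.sqrt (dotv u u).

Definition mxv A v : 'rV[R]_d := \row_i \sum_(j < d) A i j * v 0 j.

Definition opnorm A : R :=
  sup [set enorm (mxv A v) | v in [set v | enorm v <= 1]].

Definition pd (j : 'I_d) (f : 'rV[R]_d -> R) (x : 'rV[R]_d) : R :=
  'D_(ebasis j) f x.

Definition C1 (f : 'rV[R]_d -> R) : Prop :=
  forall j : 'I_d, (forall x, derivable f x (ebasis j)) /\ continuous (pd j f).
Definition C2 (f : 'rV[R]_d -> R) : Prop :=
  C1 f /\ forall j : 'I_d, C1 (pd j f).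

Definition grad (f : 'rV[R]_d -> R) (x : 'rV[R]_d) : 'rV[R]_d :=
  \row_j pd j f x.

Definition divv (F : 'rV[R]_d -> 'rV[R]_d) (x : 'rV[R]_d) : R :=
  \sum_(i < d) pd i (fun y => F y 0 i) x.

Definition divM (M : 'rV[R]_d -> 'M[R]_d) (x : 'rV[R]_d) : 'rV[R]_d :=
  \row_i \sum_(j < d) pd j (fun y => M y i j) x.

Definition drift (Psi : 'rV[R]_d -> R) (B : R -> 'rV[R]_d -> 'M[R]_d)
  (t : R) (x : 'rV[R]_d) : 'rV[R]_d :=
  - mxv (B t x) (grad Psi x) + divM (B t) x.

Definition gen (Psi : 'rV[R]_d -> R) (B : R -> 'rV[R]_d -> 'M[R]_d)
  (t : R) (V : 'rV[R]_d -> R) (x : 'rV[R]_d) : R :=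
  - dotv (grad V x) (mxv (B t x) (grad Psi x))
  + divv (fun y => mxv (B t y) (grad V y)) x.

Definition Va (a : R) (x : 'rV[R]_d) : R :=
  expR (a * Num.sqrt (1 + enorm x ^+ 2)).

Definition A1 (Psi : 'rV[R]_d -> R) (L : R) : Prop :=
  C2 Psi /\
  (forall x y, enorm (grad Psi x - grad Psi y) <= L * enorm (x - y)) /\
  grad Psi 0 = 0.

Definition A2 (B : R -> 'rV[R]_d -> 'M[R]_d) (betal betau : R) : Prop :=
  0 < betal /\ 0 < betau /\
  forall t x, 0 <= t ->
    (B t x)^T = B t x /\
    (forall v, betal * enorm v ^+ 2 <= dotv v (mxv (B t x) v)
               /\ dotv v (mxv (B t x) v) <= betau * enorm v ^+ 2).

Definition A3 (B : R -> 'rV[R]_d -> 'M[R]_d) (L nB delta : R) : Prop :=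
  (forall t, 0 <= t -> forall i j : 'I_d, C2 (fun x => B t x i j)) /\
  0 < L /\ 0 < nB /\ 1 / 2 <= delta /\
  (forall x y s t, 0 < s -> 0 < t ->
     Num.max (opnorm (B t x - B t y)) (enorm (divM (B t) x - divM (B t) y))
       <= L * (1 + enorm x `^ nB + enorm y `^ nB) * enorm (x - y)
   /\ Num.max (opnorm (B s x - B t x)) (enorm (divM (B s) x - divM (B t) x))
       <= L * (1 + enorm x `^ nB) * `|s - t| `^ delta).

Definition angle_sup (b : R -> 'rV[R]_d -> 'rV[R]_d) (r : R) : R :=
  sup [set z | exists t x, 0 <= t /\ r <= enorm x /\
         z = dotv ((enorm x)^-1 *: x) ((enorm (b t x))^-1 *: b t x)].

Definition size_inf (b : R -> 'rV[R]_d -> 'rV[R]_d) (r : R) : R :=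
  inf [set z | exists t x, 0 <= t /\ r <= enorm x /\ z = enorm (b t x)].

Definition A4 (b : R -> 'rV[R]_d -> 'rV[R]_d) : Prop :=
  (exists l : R, angle_sup b r @[r --> +oo] --> l /\ l < 0) /\
  size_inf b r @[r --> +oo] --> +oo.

End Defs.

(* Main.v *)
Require Import Defs.
From HB Require Import structures.
From mathcomp Require Import all_boot all_order all_algebra.
From mathcomp Require Import all_classical all_reals all_analysis.
From mathcomp Require Import ring lra.
Import Order.TTheory GRing.Theory Num.Theory.
Import numFieldNormedType.Exports.
Local Open Scope classical_set_scope.
Local Open Scope ring_scope.
Set Implicit Arguments. Unset Strict Implicit.

Section Main.
Variables (R : realType) (d : nat).
Local Notation V := ('rV[R]_d).
Implicit Types (u v w x y : V) (A : 'M[R]_d).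

Lemma dotvC u v : dotv u v = dotv v u.
Proof. by rewrite /dotv; apply: eq_bigr => i _; rewrite mulrC. Qed.

Lemma dotvDl u v w : dotv (u + v) w = dotv u w + dotv v w.
Proof. by rewrite /dotv -big_split; apply: eq_bigr => i _; rewrite mxE mulrDl. Qed.

Lemma dotvZl (c : R) u w : dotv (c *: u) w = c * dotv u w.
Proof. by rewrite /dotv mulr_sumr; apply: eq_bigr => i _; rewrite mxE mulrA. Qed.

Lemma dotvNl u w : dotv (- u) w = - dotv u w.
Proof. by rewrite -scaleN1r dotvZl mulN1r. Qed.

Lemma dotvBl u v w : dotv (u - v) w = dotv u w - dotv v w.
Proof. by rewrite dotvDl dotvNl. Qed.

Lemma dotvDr u v w : dotv w (u + v) = dotv w u + dotv w v.
Proof. by rewrite dotvC dotvDl !(dotvC w). Qed.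

Lemma dotvZr (c : R) u w : dotv w (c *: u) = c * dotv w u.
Proof. by rewrite dotvC dotvZl dotvC. Qed.

Lemma dotvNr u w : dotv w (- u) = - dotv w u.
Proof. by rewrite dotvC dotvNl dotvC. Qed.

Lemma dotvBr u v w : dotv w (u - v) = dotv w u - dotv w v.
Proof. by rewrite dotvDr dotvNr. Qed.

Lemma dotv_ge0 u : 0 <= dotv u u.
Proof. by rewrite /dotv; apply: sumr_ge0 => i _; rewrite -expr2 sqr_ge0. Qed.

Lemma enorm_ge0 u : 0 <= enorm u.
Proof. exact: sqrtr_ge0. Qed.

Lemma enorm_sq u : enorm u ^+ 2 = dotv u u.
Proof. by rewrite /enorm sqr_sqrtr // dotv_ge0. Qed.

Lemma dotv_amgm u v : 2 * dotv u v <= dotv u u + dotv v v.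
Proof.
have := dotv_ge0 (u - v).
rewrite dotvBl !dotvBr (dotvC v u) subr_ge0 => H.
move: H; set a := dotv u u; set b := dotv u v; set c := dotv v v => H.
by rewrite -subr_ge0; move: H; rewrite -subr_ge0 => H; 
  rewrite (_ : a + c - 2 * b = a - b - (b - c)) //; ring.
Qed.

Lemma dotv_ebasis x (j : 'I_d) : dotv x (ebasis R j) = x 0 j.
Proof.
rewrite /dotv (bigD1 j) //= big1 ?addr0; first by rewrite mxE eqxx mulr1.
by move=> i /negbTE ij; rewrite mxE ij mulr0.
Qed.

Lemma dotv_ebasis_self (j : 'I_d) : dotv (ebasis R j) (ebasis R j) = 1.
Proof. by rewrite dotv_ebasis mxE eqxx. Qed.

Lemma mxvD A u v : mxv A (u + v) = mxv A u + mxv A v.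
Proof.
apply/rowP => i; rewrite !mxE -big_split; apply: eq_bigr => j _.
by rewrite mxE mulrDr.
Qed.

Lemma mxvZ A (c : R) u : mxv A (c *: u) = c *: mxv A u.
Proof.
apply/rowP => i; rewrite !mxE mulr_sumr; apply: eq_bigr => j _.
by rewrite mxE mulrCA.
Qed.

Lemma mxvN A u : mxv A (- u) = - mxv A u.
Proof. by rewrite -scaleN1r mxvZ scaleN1r. Qed.

Lemma dotv_mxv A u v : dotv u (mxv A v) = \sum_i \sum_j u 0 i * A i j * v 0 j.
Proof.
rewrite /dotv; apply: eq_bigr => i _; rewrite mxE mulr_sumr.
by apply: eq_bigr => j _; rewrite mulrA.
Qed.

Lemma dotv_mxv_sym A u v : A^T = A -> dotv u (mxv A v) = dotv v (mxv A u).
Proof.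
move=> HA; rewrite !dotv_mxv exchange_big /=; apply: eq_bigr => i _.
apply: eq_bigr => j _.
have -> : A j i = A i j by rewrite -{1}HA mxE.
by ring.
Qed.

Lemma polar A (beta : R) u w : A^T = A ->
  (forall v, 0 <= dotv v (mxv A v) /\ dotv v (mxv A v) <= beta * enorm v ^+ 2) ->
  `|2 * dotv u (mxv A w)| <= beta * (dotv u u + dotv w w).
Proof.
move=> HA Hq.
have Q : forall v, dotv v (mxv A v) <= beta * dotv v v.
  by move=> v; rewrite -enorm_sq; case: (Hq v).
have P : forall v, 0 <= dotv v (mxv A v) by move=> v; case: (Hq v).
have Hs : dotv w (mxv A u) = dotv u (mxv A w) by rewrite dotv_mxv_sym.
have E1 : dotv (u + w) (mxv A (u + w)) =
   dotv u (mxv A u) + dotv w (mxv A w) + 2 * dotv u (mxv A w).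
  by rewrite mxvD !dotvDl !dotvDr Hs; ring.
have E2 : dotv (u - w) (mxv A (u - w)) =
   dotv u (mxv A u) + dotv w (mxv A w) - 2 * dotv u (mxv A w).
  by rewrite mxvD mxvN !dotvDl !dotvNl !dotvDr !dotvNr Hs; ring.
have := P (u + w); have := P (u - w); rewrite E1 E2 => h1 h2.
have := Q u; have := Q w => q1 q2.
rewrite ler_norml; apply/andP; split; lra.
Qed.


Lemma deriveDir (f : V -> R) (x v : V) :
  'D_v f x = 'D_1 (fun h : R => f (h *: v + x)) 0.
Proof.
rewrite /derive; set g1 := fun h => h^-1 *: _; set g2 := fun h => h^-1 *: _.
suff -> : g1 = g2 by [].
by rewrite funeqE /g1 /g2 => h /=; rewrite addr0 scale0r add0r [_%:A]mulr1.
Qed.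

Lemma is_deriveDir (f : V -> R) (x v : V) (df : R) :
  is_derive x v f df <-> is_derive (0:R) 1 (fun h : R => f (h *: v + x)) df.
Proof.
split=> -[H1 H2]; apply: DeriveDef.
- by move/derivable1P: H1.
- by rewrite -deriveDir.
- by apply/derivable1P.
- by rewrite deriveDir.
Qed.

Lemma is_derive_compR (f : V -> R) (g : R -> R) (x v : V) (df dg : R) :
  is_derive x v f df -> is_derive (f x) 1 g dg ->
  is_derive x v (fun y => g (f y)) (dg * df).
Proof.
move=> /is_deriveDir Hf Hg; apply/is_deriveDir.
have Hg' : is_derive ((fun h : R => f (h *: v + x)) 0) 1 g dg.
  by rewrite /= scale0r add0r.
exact: (@is_derive1_comp R g (fun h : R => f (h *: v + x)) 0 dg df Hg' Hf).
Qed.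

Lemma is_derive_coord (x v : V) (k : 'I_d) :
  is_derive x v (fun y : V => y 0 k) (v 0 k).
Proof.
apply/is_deriveDir.
have -> : (fun h : R => (h *: v + x) 0 k) = (fun h : R => h * v 0 k) + cst (x 0 k).
  by apply: funext => h; rewrite !mxE.
rewrite -[v 0 k]addr0; apply: is_deriveD.
have -> : (fun h : R => h * (v 0 k + 0)) = (@id R) * cst (v 0 k + 0).
  by apply: funext.
have H := (is_deriveM (is_derive_id (0:R) (1:R)) (is_derive_cst (v 0 k + 0) (0:R) (1:R))).
apply: (is_derive_eq H).
by rewrite /= scaler0 add0r /cst [_%:A]mulr1 addr0.
Qed.

Lemma is_derive_sumf n (h : 'I_n -> V -> R) (x v : V) (dh : 'I_n -> R) :
  (forall i, is_derive x v (h i) (dh i)) ->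
  is_derive x v (fun y => \sum_(i < n) h i y) (\sum_(i < n) dh i).
Proof.
move=> H; have := is_derive_sum H.
by rewrite (_ : \sum_(i < n) h i = fun y => \sum_(i < n) h i y) // fct_sumE.
Qed.

Lemma is_deriveMf (f g : V -> R) (x v : V) (df dg : R) :
  is_derive x v f df -> is_derive x v g dg ->
  is_derive x v (fun y => f y * g y) (f x * dg + g x * df).
Proof. move=> H1 H2; exact: (is_deriveM H1 H2). Qed.


Lemma is_deriveDf (f g : V -> R) (x v : V) (df dg : R) :
  is_derive x v f df -> is_derive x v g dg ->
  is_derive x v (fun y => f y + g y) (df + dg).
Proof. move=> H1 H2; exact: (is_deriveD H1 H2). Qed.

Lemma is_derive_cstf (c : R) (x v : V) : is_derive x v (fun _ => c) 0.
Proof. exact: is_derive_cst. Qed.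

Lemma is_derive_ext (f g : V -> R) (x v : V) (df dg : R) :
  is_derive x v f df -> f = g -> df = dg -> is_derive x v g dg.
Proof. by move=> H <- <-. Qed.

Lemma is_derive_dotself x v : is_derive x v (fun y => dotv y y) (2 * dotv x v).
Proof.
have H := (is_derive_sumf (fun i =>
   is_deriveMf (is_derive_coord x v i) (is_derive_coord x v i))).
apply: (is_derive_ext H) => //.
rewrite /dotv mulr_sumr; apply: eq_bigr => i _; ring.
Qed.

Definition phi y : R := Num.sqrt (1 + dotv y y).

Lemma phi_ge1 y : 1 <= phi y.
Proof.
rewrite /phi -{1}sqrtr1 ler_sqrt; first by rewrite lerDl dotv_ge0.
by rewrite addr_ge0 // dotv_ge0.
Qed.

Lemma phi_gt0 y : 0 < phi y.
Proof. exact: (lt_le_trans ltr01 (phi_ge1 y)). Qed.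

Lemma phi_sq y : phi y ^+ 2 = 1 + dotv y y.
Proof. by rewrite /phi sqr_sqrtr // addr_ge0 // dotv_ge0. Qed.

Lemma is_derive_phi x v : is_derive x v phi (dotv x v / phi x).
Proof.
have H0 : 0 < 1 + dotv x x by rewrite ltr_wpDr // dotv_ge0.
have H := is_derive_compR (is_deriveDf (is_derive_cstf 1 x v) (is_derive_dotself x v))
   (is_derive1_sqrt H0).
apply: (is_derive_eq H); rewrite -/(phi x) add0r.
have := phi_gt0 x; rewrite lt0r => /andP [p0 _].
by field.
Qed.

Lemma Va_phi (a : R) y : Va a y = expR (a * phi y).
Proof. by rewrite /Va enorm_sq. Qed.

Definition G (a : R) y : R := a * Va a y / phi y.

Lemma is_derive_Va (a : R) x v :
  is_derive x v (Va a) (Va a x * (a * (dotv x v / phi x))).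
Proof.
have -> : Va a = fun y => expR ((fun y => a * phi y) y).
  by apply: funext => y; rewrite Va_phi.
have H := is_derive_compR (is_deriveMf (is_derive_cstf a x v) (is_derive_phi x v))
   (is_derive_expR (a * phi x)).
apply: (is_derive_eq H); by rewrite mulr0 addr0.
Qed.

Lemma pd_Va (a : R) (j : 'I_d) y : pd j (Va a) y = G a y * y 0 j.
Proof.
rewrite /pd (@derive_val _ _ _ _ _ _ _ (is_derive_Va a y (ebasis R j))) dotv_ebasis /G.
have := phi_gt0 y; rewrite lt0r => /andP [p0 _].
by field.
Qed.

Lemma grad_Va (a : R) y : grad (Va a) y = G a y *: y.
Proof. by apply/rowP => j; rewrite !mxE pd_Va. Qed.

Lemma is_derive_G (a : R) x v :
  is_derive x v (G a) (G a x * dotv x v * (a / phi x - 1 / phi x ^+ 2)).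
Proof.
have p0 : phi x != 0 by have := phi_gt0 x; rewrite lt0r => /andP [].
have HV : is_derive x v (fun y => (phi y)^-1) (- (phi x) ^- 2 *: (dotv x v / phi x)).
  have D := is_derive_phi x v.
  apply: DeriveDef; first by apply: derivableV => //; exact: ex_derive.
  by rewrite deriveV // derive_val.
have H := is_deriveMf (is_deriveMf (is_derive_cstf a x v) (is_derive_Va a x v)) HV.
have -> : G a = fun y => a * Va a y * (phi y)^-1 by [].
apply: (is_derive_eq H); rewrite /G /=.
have E : forall r s : R, r *: s = r * s by [].
rewrite E; by field.
Qed.


Lemma mxv_entry (A : 'M[R]_d) y (i : 'I_d) : mxv A y 0 i = \sum_j A i j * y 0 j.
Proof. by rewrite mxE. Qed.

Lemma is_derive_row (a : R) (Bf : V -> 'M[R]_d) (i : 'I_d) x :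
  (forall j, derivable (fun y => Bf y i j) x (ebasis R i)) ->
  is_derive x (ebasis R i) (fun y => mxv (Bf y) (grad (Va a) y) 0 i)
    (G a x * \sum_j (Bf x i j * ebasis R i 0 j + x 0 j * pd i (fun y => Bf y i j) x)
     + (\sum_j Bf x i j * x 0 j) * (G a x * x 0 i * (a / phi x - 1 / phi x ^+ 2))).
Proof.
move=> HB.
have H := is_deriveMf (is_derive_G a x (ebasis R i))
   (is_derive_sumf (fun j => is_deriveMf (derivableP (HB j)) (is_derive_coord x (ebasis R i) j))).
apply: (is_derive_ext H).
  apply: funext => y; rewrite grad_Va mxvZ mxE mxv_entry; congr (_ * _).
by rewrite dotv_ebasis.
Qed.

Lemma sum_ebasis (f : 'I_d -> R) (i : 'I_d) : \sum_j f j * ebasis R i 0 j = f i.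
Proof.
rewrite (bigD1 i) //= big1 ?addr0; first by rewrite mxE eqxx mulr1.
by move=> j /negbTE ij; rewrite mxE ij mulr0.
Qed.

Lemma gen_Va (Psi : V -> R) (B : R -> V -> 'M[R]_d) (t a : R) x :
  (forall y, (B t y)^T = B t y) ->
  (forall i j, C1 (fun y => B t y i j)) ->
  gen Psi B t (Va a) x = G a x * (dotv (drift Psi B t x) x + \sum_i B t x i i
     + (a / phi x - 1 / phi x ^+ 2) * dotv x (mxv (B t x) x)).
Proof.
move=> Hsym HC.
have Hder : forall i j, derivable (fun y => B t y i j) x (ebasis R i).
  by move=> i j; case: (HC i j i) => H _; exact: H.
have Hpd : forall i, pd i (fun y => mxv (B t y) (grad (Va a) y) 0 i) x =
    G a x * \sum_j (B t x i j * ebasis R i 0 j + x 0 j * pd i (fun y => B t y i j) x)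
     + (\sum_j B t x i j * x 0 j) * (G a x * x 0 i * (a / phi x - 1 / phi x ^+ 2)).
  move=> i; have := is_derive_row a (Hder i).
  move=> /(@derive_val _ _ _ _ _ _ _) <-. by [].
have Hs : forall i j, pd i (fun y => B t y i j) x = pd i (fun y => B t y j i) x.
  move=> i j; congr pd; apply: funext => y.
  by rewrite -{1}Hsym mxE.
rewrite /gen /divv (eq_bigr _ (fun i _ => Hpd i)) grad_Va dotvZl.
set c := (a / phi x - 1 / phi x ^+ 2).
have S1 : \sum_i (G a x * \sum_j (B t x i j * ebasis R i 0 j + x 0 j * pd i (fun y => B t y i j) x)
     + (\sum_j B t x i j * x 0 j) * (G a x * x 0 i * c)) =
   G a x * \sum_i B t x i i + G a x * (\sum_i \sum_j x 0 j * pd i (fun y => B t y j i) x)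
   + G a x * c * \sum_i x 0 i * (\sum_j B t x i j * x 0 j).
  rewrite !mulr_sumr -!big_split /=; apply: eq_bigr => i _.
  rewrite big_split /= sum_ebasis mulrDr.
  have -> : \sum_(j<d) x 0 j * pd i (fun y => B t y i j) x =
     \sum_(j<d) x 0 j * pd i (fun y => B t y j i) x by apply: eq_bigr => j _; rewrite Hs.
  by ring.
rewrite S1.
have S2 : \sum_i \sum_j x 0 j * pd i (fun y => B t y j i) x = dotv (divM (B t) x) x.
  rewrite exchange_big /dotv; apply: eq_bigr => j _; rewrite mxE mulr_suml.
  by apply: eq_bigr => i _; rewrite mulrC.
have S3 : \sum_i x 0 i * (\sum_j B t x i j * x 0 j) = dotv x (mxv (B t x) x).
  by rewrite /dotv; apply: eq_bigr => i _; rewrite mxE.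
rewrite S2 S3 /drift dotvDl dotvNl (dotvC (mxv _ _) x).
by ring.
Qed.

Lemma unit_dot_le1 y z : dotv ((enorm y)^-1 *: y) ((enorm z)^-1 *: z) <= 1.
Proof.
have H1 : forall w : V, dotv ((enorm w)^-1 *: w) ((enorm w)^-1 *: w) <= 1.
  move=> w; rewrite dotvZl dotvZr -enorm_sq.
  have [->|w0] := eqVneq (enorm w) 0; first by rewrite invr0 !mul0r ler01.
  by have -> : (enorm w)^-1 * ((enorm w)^-1 * enorm w ^+ 2) = 1 by field.
have := dotv_amgm ((enorm y)^-1 *: y) ((enorm z)^-1 *: z).
have := H1 y; have := H1 z; lra.
Qed.

Lemma dot_unit y z : 0 < enorm y -> 0 < enorm z ->
  dotv y z = enorm y * enorm z * dotv ((enorm y)^-1 *: y) ((enorm z)^-1 *: z).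
Proof.
move=> y0 z0; rewrite dotvZl dotvZr.
have y1 : enorm y != 0 by rewrite gt_eqF.
have z1 : enorm z != 0 by rewrite gt_eqF.
by field; rewrite z1 y1.
Qed.

Lemma A4_large (b : R -> V -> V) (K : R) : A4 b -> 0 < K ->
  exists r0, 1 <= r0 /\ forall t x, 0 <= t -> r0 <= enorm x ->
    dotv (b t x) x <= - K * phi x.
Proof.
case=> [[l [Hl l0]] Hs] K0.
have l2 : l < l / 2 by lra.
have E1 := cvgr_lt l Hl (l / 2) l2.
set c := - l / 2.
have c0 : 0 < c by rewrite /c; lra.
have E2 := (cvgryPge _).1 Hs (2 * K / c).
case: E1 => M1 [M1r HM1].
case: E2 => M2 [M2r HM2].
set m := Num.max (Num.max M1 M2) 0.
have m1 : M1 <= m by rewrite /m !le_max lexx.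
have m2 : M2 <= m by rewrite /m !le_max lexx orbT.
have m0 : 0 <= m by rewrite /m !le_max lexx orbT.
exists (m + 1); split; first lra.
move=> t x t0 rx.
have Ha : angle_sup b (m + 1) < l / 2 by apply: HM1; lra.
have Hb : 2 * K / c <= size_inf b (m + 1) by apply: HM2; lra.
have Hub : dotv ((enorm x)^-1 *: x) ((enorm (b t x))^-1 *: b t x) <= angle_sup b (m + 1).
  apply: ub_le_sup; last by exists t, x.
  by exists 1 => z [t' [x' [_ [_ ->]]]]; exact: unit_dot_le1.
have Hlb : size_inf b (m + 1) <= enorm (b t x).
  apply: ge_inf; last by exists t, x.
  by exists 0 => z [t' [x' [_ [_ ->]]]]; exact: enorm_ge0.
have Kc : 0 < 2 * K / c by apply: divr_gt0 => //; lra.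
have bx0 : 0 < enorm (b t x) by lra.
have x0 : 0 < enorm x by lra.
rewrite dotvC (dot_unit x0 bx0).
set u := dotv _ _ in Hub *.
have Hphi : phi x <= 2 * enorm x.
  have : phi x ^+ 2 <= (2 * enorm x) ^+ 2.
    rewrite phi_sq -enorm_sq; nra.
  rewrite ler_sqr ?nnegrE //; [exact: ltW (phi_gt0 x)|nra].
have Hu : u <= - c by rewrite /c; lra.
have H1 : enorm x * enorm (b t x) * u <= enorm x * enorm (b t x) * (- c).
  by rewrite ler_wpM2l // mulr_ge0 // ltW.
have H2 : enorm x * (2 * K / c) <= enorm x * enorm (b t x).
  rewrite ler_wpM2l ?enorm_ge0 //; lra.
have H3 : enorm x * (2 * K / c) * c = 2 * K * enorm x.
  have c1 : c != 0 by rewrite gt_eqF.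
  by field.
nra.
Qed.

Lemma enormZ (c : R) x : enorm (c *: x) = `|c| * enorm x.
Proof.
by rewrite /enorm dotvZl dotvZr mulrA -expr2 sqrtrM ?sqr_ge0 // sqrtr_sqr.
Qed.

Lemma coord_sq_le x (i : 'I_d) : x 0 i ^+ 2 <= dotv x x.
Proof.
rewrite /dotv (bigD1 i) //= -expr2 lerDl.
by apply: sumr_ge0 => j _; rewrite -expr2 sqr_ge0.
Qed.

Lemma cont_sum n (h : 'I_n -> V -> R) :
  (forall i, continuous (h i)) -> continuous (fun y => \sum_(i < n) h i y).
Proof.
move=> H; rewrite -fct_sumE.
elim/big_ind: _ => //; first exact: cst_continuous.
by move=> f g cf cg x; apply: continuousD; [exact: cf|exact: cg].
Qed.

Lemma cont_mul (f g : V -> R) : continuous f -> continuous g ->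
  continuous (fun y => f y * g y).
Proof. by move=> cf cg x; apply: continuousM; [exact: cf|exact: cg]. Qed.

Lemma box_bound (g : V -> R) (r : R) : continuous g -> 0 <= r ->
  exists Mc, forall x, enorm x <= r -> g x <= Mc.
Proof.
move=> cg r0.
set A := [set v : V | forall i, [set` `[- r, r]] (v ord0 i)].
have A0 : A !=set0.
  by exists 0 => i; rewrite /= mxE in_itv /= oppr_le0 r0.
have cA : compact A.
  by apply: (@rV_compact _ _ (fun _ => [set` `[- r, r]])) => i; exact: segment_compact.
have [c _ Hc] := EVT_max_rV A0 cA (continuous_subspaceT cg).
exists (g c) => x xr; apply: Hc; rewrite inE => i.
rewrite /= in_itv /=.
have := coord_sq_le x i; rewrite -enorm_sq => H.
have := enorm_ge0 x => H0.
apply/andP; split; nra.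
Qed.

Lemma dotv0r u : dotv u 0 = 0.
Proof. by rewrite /dotv big1 // => i _; rewrite mxE mulr0. Qed.

Lemma enorm0_eq x : enorm x = 0 -> x = 0.
Proof.
move=> H; apply/rowP => i; rewrite mxE.
have := coord_sq_le x i; rewrite -enorm_sq H expr0n /= => H2.
have := sqr_ge0 (x 0 i) => H3.
by apply/eqP; rewrite -sqrf_eq0 eq_le H2 H3.
Qed.

Lemma small_region (Psi : V -> R) (B : R -> V -> 'M[R]_d) (L betal betau nB delta r0 : R) :
  A1 Psi L -> A2 B betal betau -> A3 B L nB delta -> 1 <= r0 ->
  (forall t x, 0 <= t -> r0 <= enorm x -> dotv (drift Psi B t x) x <= 0) ->
  exists M, 0 <= M /\ forall t x, 0 <= t -> enorm x <= r0 -> dotv (drift Psi B t x) x <= M.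
Proof.
move=> [HC2 [HL Hg0]] [bl0 [bu0 HB]] [HBC [L0 [nB0 [_ HLip]]]] r1 Hlarge.
have gradb : forall x, dotv (grad Psi x) (grad Psi x) <= L ^+ 2 * dotv x x.
  move=> x; have := HL x 0; rewrite Hg0 !subr0 => H.
  have := enorm_ge0 (grad Psi x); have := enorm_ge0 x.
  rewrite -!enorm_sq; nra.
have Hq : forall t x v, 0 <= t ->
    0 <= dotv v (mxv (B t x) v) /\ dotv v (mxv (B t x) v) <= betau * enorm v ^+ 2.
  move=> t x v t0; have [_ /(_ v) [H1 H2]] := HB t x t0; split => //.
  apply: le_trans H1; apply: mulr_ge0; [exact: ltW|exact: sqr_ge0].
have Hsym : forall t x, 0 <= t -> (B t x)^T = B t x by move=> t x t0; case: (HB t x t0).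
have nsq : forall x, enorm x <= r0 -> dotv x x <= r0 ^+ 2.
  move=> x H; have := enorm_ge0 x; rewrite -enorm_sq; nra.
set P := betau * (1 + L ^+ 2) * r0 ^+ 2.
have P0 : 0 <= P.
  by rewrite /P; apply: mulr_ge0; [apply: mulr_ge0; [exact: ltW|rewrite addr_ge0 // sqr_ge0]|exact: sqr_ge0].
have Hpol : forall t x y, 0 <= t -> enorm x <= r0 -> enorm y <= r0 ->
    `|dotv (mxv (B t x) (grad Psi x)) y| <= P.
  move=> t x y t0 xr yr.
  have := polar y (grad Psi x) (Hsym t x t0) (Hq t x ^~ t0).
  rewrite dotvC; set s := dotv _ _ => H.
  have := gradb x; have := nsq x xr; have := nsq y yr.
  move: H; rewrite !ler_norml => /andP [H1 H2] h1 h2 h3.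
  have h4 : 0 <= dotv x x by exact: dotv_ge0.
  have h5 : dotv (grad Psi x) (grad Psi x) <= L ^+ 2 * r0 ^+ 2.
    by apply: le_trans h3 _; rewrite ler_wpM2l // sqr_ge0.
  have h6 : betau * (dotv y y + dotv (grad Psi x) (grad Psi x)) <= P.
    rewrite /P -mulrA; apply: ler_wpM2l; first exact: ltW.
    rewrite mulrDl mul1r; lra.
  have h7 : 0 <= betau * (dotv y y + dotv (grad Psi x) (grad Psi x)).
    by apply: mulr_ge0; [exact: ltW| apply: addr_ge0; exact: dotv_ge0].
  apply/andP; split; lra.
have [Mc HMc] : exists Mc, forall x, enorm x <= r0 ->
    dotv (divM (B 0) x) (divM (B 0) x) <= Mc.
  apply: box_bound; last lra.
  rewrite /dotv; apply: cont_sum => i; apply: cont_mul;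
  (have -> : (fun y => divM (B 0) y 0 i) =
     (fun y => \sum_(j < d) pd j (fun z => B 0 z i j) y) by apply: funext => y; rewrite mxE);
  apply: cont_sum => j; by case: ((HBC 0 (lexx 0) i j).1 j).
set Q := L * (1 + 2 * r0 `^ nB) * r0.
have Q0 : 0 <= Q.
  apply: mulr_ge0; last lra. apply: mulr_ge0; first exact: ltW.
  by rewrite addr_ge0 // mulr_ge0 // powR_ge0.
exists (3 * P + (Num.max Mc 0 + Q ^+ 2 + 2 * r0 ^+ 2) / 2); split.
  have : 0 <= Num.max Mc 0 by rewrite le_max lexx orbT.
  have := sqr_ge0 Q; have := sqr_ge0 r0; lra.
have Mcm : Mc <= Num.max Mc 0 by rewrite le_max lexx.
move=> t x t0 xr.
have hQ2 := sqr_ge0 Q; have hr2 := sqr_ge0 r0.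
have [->|tpos] := eqVneq t 0.
  have H1 := Hpol 0 x x (lexx 0) xr xr.
  have H2 := dotv_amgm (divM (B 0) x) x.
  have H3 := HMc x xr; have H4 := nsq x xr.
  rewrite /drift dotvDl dotvNl.
  move: H1; rewrite ler_norml => /andP [H1 H1'].
  lra.
have tp : 0 < t by rewrite lt_neqAle eq_sym tpos t0.
have [xr0|xr0] := leP r0 (enorm x).
  have := Hlarge t x t0 xr0.
  have : 0 <= Num.max Mc 0 by rewrite le_max lexx orbT.
  lra.
have [x0|x0] := eqVneq (enorm x) 0.
  rewrite (enorm0_eq x0) dotv0r.
  have : 0 <= Num.max Mc 0 by rewrite le_max lexx orbT.
  lra.
have xp : 0 < enorm x by rewrite lt_neqAle eq_sym x0 enorm_ge0.
set k := r0 / enorm x.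
have k1 : 1 <= k by rewrite /k ler_pdivlMr // mul1r ltW.
set y := k *: x.
have ey : enorm y = r0.
  rewrite /y enormZ ger0_norm; last lra.
  by rewrite /k mulrAC -mulrA mulfV ?mulr1.
have exy : enorm (x - y) <= r0.
  have -> : x - y = (1 - k) *: x by rewrite /y scalerBl scale1r.
  rewrite enormZ ler0_norm; last lra.
  rewrite opprB mulrBl mul1r.
  have -> : k * enorm x = r0 by rewrite /k mulrAC -mulrA mulfV ?mulr1.
  have := enorm_ge0 x; lra.
have yr : enorm y <= r0 by rewrite ey.
have Hlip := (HLip x y t t tp tp).1.
have HD : enorm (divM (B t) x - divM (B t) y) <= Q.
  move: Hlip; rewrite ge_max => /andP [_ Hl]; apply: le_trans Hl _.
  rewrite /Q.
  have pxn : enorm x `^ nB <= r0 `^ nB.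
    apply: ge0_ler_powR; [exact: ltW|rewrite nnegrE; exact: enorm_ge0|
       rewrite nnegrE; lra| exact: ltW].
  have pyn : enorm y `^ nB = r0 `^ nB by rewrite ey.
  apply: ler_pM; first by apply: mulr_ge0; [exact: ltW|
     rewrite addr_ge0 // ?addr_ge0 // powR_ge0].
    exact: enorm_ge0.
    apply: ler_wpM2l; first exact: ltW. lra.
  exact: exy.
set D := divM (B t) x - divM (B t) y.
have HD2 : dotv D D <= Q ^+ 2 by rewrite -enorm_sq; have := enorm_ge0 D; nra.
have E : drift Psi B t x = drift Psi B t y - mxv (B t x) (grad Psi x)
    + mxv (B t y) (grad Psi y) + D.
  by apply/rowP => i; rewrite /drift /D !mxE; ring.
have Hy' := Hlarge t y t0 (ltac:(by rewrite ey)).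
have H1 := Hpol t x y t0 (ltW xr0) yr.
have H2 := Hpol t y y t0 yr yr.
have H3 := dotv_amgm D y.
have H4 : dotv y y = r0 ^+ 2 by rewrite -enorm_sq ey.
have Hby : dotv (drift Psi B t x) y <= 2 * P + (Q ^+ 2 + r0 ^+ 2) / 2.
  move: E Hy'; generalize (drift Psi B t y) => bY E Hy'.
  clearbody D.
  rewrite E !dotvDl dotvNl.
  move: H1 H2; rewrite !ler_norml => /andP [H1 H1'] /andP [H2 H2'].
  lra.
have Hxy : dotv (drift Psi B t x) y = k * dotv (drift Psi B t x) x by rewrite /y dotvZr.
rewrite Hxy in Hby.
have : 0 <= Num.max Mc 0 by rewrite le_max lexx orbT.
nra.
Qed.

Lemma G_ge0 (a : R) x : 0 < a -> 0 <= G a x.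
Proof.
move=> a0; rewrite /G; apply: divr_ge0; last exact: ltW (phi_gt0 x).
by apply: mulr_ge0; [exact: ltW | rewrite Va_phi; exact: expR_ge0].
Qed.

Lemma gen_bound (Psi : V -> R) (B : R -> V -> 'M[R]_d) (t a betau : R) x :
  0 < a -> 0 < betau ->
  (forall y, (B t y)^T = B t y) ->
  (forall i j, C1 (fun y => B t y i j)) ->
  (forall v, 0 <= dotv v (mxv (B t x) v) /\ dotv v (mxv (B t x) v) <= betau * enorm v ^+ 2) ->
  gen Psi B t (Va a) x <= G a x * (dotv (drift Psi B t x) x + d%:R * betau + a * betau * phi x).
Proof.
move=> a0 b0 Hsym HC Hq.
rewrite gen_Va //; apply: ler_wpM2l; first exact: G_ge0.
have Htr : \sum_i B t x i i <= d%:R * betau.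
  have Hi : forall i : 'I_d, B t x i i <= betau.
    move=> i; have [_ H] := Hq (ebasis R i).
    move: H; rewrite enorm_sq dotv_ebasis_self mulr1 dotvC dotv_ebasis mxE sum_ebasis.
    by [].
  apply: le_trans (ler_sum _ (fun i _ => Hi i)) _.
  by rewrite sumr_const card_ord mulr_natl.
have Hc : (a / phi x - 1 / phi x ^+ 2) * dotv x (mxv (B t x) x) <= a * betau * phi x.
  have [q0 q1] := Hq x.
  move: q1; rewrite enorm_sq => q1.
  have p0 := phi_gt0 x.
  have hp := phi_sq x.
  set q := dotv x (mxv (B t x) x) in q0 q1 *.
  have h1 : 0 <= q / phi x ^+ 2 by apply: divr_ge0 => //; exact: sqr_ge0.
  have h2 : a / phi x * q <= a / phi x * (betau * phi x ^+ 2).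
    apply: ler_wpM2l; first by apply: divr_ge0; exact: ltW.
    apply: le_trans q1 _; apply: ler_wpM2l; first exact: ltW.
    by rewrite hp lerDr.
  have h3 : a / phi x * (betau * phi x ^+ 2) = a * betau * phi x.
    have pn : phi x != 0 by rewrite gt_eqF.
    by field.
  have h4 : (a / phi x - 1 / phi x ^+ 2) * q = a / phi x * q - q / phi x ^+ 2 by ring.
  rewrite h4; lra.
lra.
Qed.

End Main.

Unset Implicit Arguments. Set Strict Implicit.

Theorem lemma4 (R : realType) (d : nat) (hd : (1 <= d)%N)
  (Psi : 'rV[R]_d -> R) (B : R -> 'rV[R]_d -> 'M[R]_d)
  (L betal betau nB delta : R) :
  A1 Psi L -> A2 B betal betau -> A3 B L nB delta -> A4 (drift Psi B) ->
  forall a : R, 0 < a ->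
  exists lambda rho : R, 0 < lambda /\ 0 < rho /\
    forall (t : R) (x : 'rV[R]_d), 0 <= t ->
      gen Psi B t (Va a) x <= - lambda * Va a x + rho.
Proof.
move=> HA1 HA2 HA3 HA4 a a0.
have HA2' := HA2; have HA3' := HA3.
case: HA2' => [bl0 [bu0 HB]].
case: HA3' => [HBC _].
set Cc := d%:R * betau + a * betau.
have Cc0 : 0 <= Cc.
  by rewrite /Cc addr_ge0 // mulr_ge0 // ltW.
have K0 : 0 < Cc + 1 by lra.
have [r0 [r1 Hl]] := A4_large HA4 K0.
have Hlarge0 : forall t x, 0 <= t -> r0 <= enorm x -> dotv (drift Psi B t x) x <= 0.
  move=> t x t0 xr; apply: le_trans (Hl t x t0 xr) _.
  have := phi_gt0 x; nra.
have [M [M0 HM]] := small_region HA1 HA2 HA3 r1 Hlarge0.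
set Vm := expR (a * Num.sqrt (1 + r0 ^+ 2)).
have Vm0 : 0 < Vm by exact: expR_gt0.
exists a, (a * Vm * (M + Cc + 1)); split => //; split.
  by apply: mulr_gt0; [exact: mulr_gt0|lra].
move=> t x t0.
have Hsym : forall y, (B t y)^T = B t y by move=> y; case: (HB t y t0).
have HC : forall i j, C1 (fun y => B t y i j).
  by move=> i j; case: (HBC t t0 i j).
have Hq : forall v, 0 <= dotv v (mxv (B t x) v) /\ dotv v (mxv (B t x) v) <= betau * enorm v ^+ 2.
  move=> v; have [_ /(_ v) [H1 H2]] := HB t x t0; split => //.
  apply: le_trans H1; apply: mulr_ge0; [exact: ltW|exact: sqr_ge0].
have Hg := gen_bound Psi a0 bu0 Hsym HC Hq.
have p0 := phi_gt0 x.
have p1 := phi_ge1 x.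
have HV : Va a x = expR (a * phi x) by rewrite Va_phi.
have V0 : 0 < Va a x by rewrite HV expR_gt0.
have HG : G a x * phi x = a * Va a x.
  have pn : phi x != 0 by rewrite gt_eqF.
  by rewrite /G; field.
have G0 := G_ge0 x a0.
have hb0 : 0 <= d%:R * betau by rewrite mulr_ge0 // ltW.
have [xr|xr] := leP r0 (enorm x).
  have H := Hl t x t0 xr.
  have H2 : dotv (drift Psi B t x) x + d%:R * betau + a * betau * phi x <= - phi x.
    rewrite /Cc in H.
    have : d%:R * betau <= d%:R * betau * phi x by rewrite ler_peMr.
    nra.
  have H3 : G a x * (dotv (drift Psi B t x) x + d%:R * betau + a * betau * phi x)
      <= G a x * (- phi x) by rewrite ler_wpM2l.
  have : 0 < a * Vm * (M + Cc + 1) by apply: mulr_gt0; [exact: mulr_gt0|lra].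
  rewrite mulrN HG in H3.
  lra.
have H := HM t x t0 (ltW xr).
have HVm : Va a x <= Vm.
  rewrite HV /Vm ler_expR; apply: ler_wpM2l; first exact: ltW.
  rewrite /phi ler_sqrt.
    rewrite lerD2l -enorm_sq; have := enorm_ge0 x; nra.
  by rewrite addr_ge0 // sqr_ge0.
have H2 : G a x * (dotv (drift Psi B t x) x + d%:R * betau + a * betau * phi x)
   <= a * Va a x * (M + Cc).
  have E : G a x * (dotv (drift Psi B t x) x + d%:R * betau + a * betau * phi x)
     = G a x * (dotv (drift Psi B t x) x + d%:R * betau) + a * betau * (G a x * phi x) by ring.
  rewrite E HG.
  have : G a x * (dotv (drift Psi B t x) x + d%:R * betau) <= G a x * (M + d%:R * betau).
    by rewrite ler_wpM2l // lerD2r.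
  have : G a x * (M + d%:R * betau) <= G a x * phi x * (M + d%:R * betau).
    have h0 : 0 <= M + d%:R * betau by lra.
    have h1 : 0 <= phi x - 1 by lra.
    have := mulr_ge0 (mulr_ge0 G0 h0) h1.
    nra.
  rewrite HG /Cc.
  nra.
have H3 : a * Va a x * (M + Cc + 1) <= a * Vm * (M + Cc + 1).
  apply: ler_wpM2r; first lra.
  by apply: ler_wpM2l => //; exact: ltW.
nra.
Qed.
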